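(* There is a weight-preserving bijection from $\mathcal{P}3_{o}$ to $\mathcal{D}_{o}\times\mathcal{D}_{4,2}$.
   Context: A partition of $n$ is a non-increasing finite sequence of positive integers (parts) summing to $n$; its weight is the sum of its parts. $\mathcal{P}3_{o}$ denotes the set of partitions into odd parts in which each part size occurs at most $3$ times. $\mathcal{D}_{o}$ denotes the set of partitions into distinct odd parts. $\mathcal{D}_{4,2}$ denotes the set of partitions into distinct parts congruent to $2$ modulo $4$. The weight of a pair of partitions is the sum of the weights of its components; a bijection is weight-preserving if each object and its image have the same weight. *)

(* Defs.v *)
From mathcomp Require Import all_boot.
Set Implicit Arguments. Unset Strict Implicit. Unset Printing Implicit Defensive.

Definition is_partition (s : seq nat) : bool :=
  sorted geq s && all (fun x => 0 < x) s.

Definition weight (s : seq nat) : nat := sumn s.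

Definition is_P3o (s : seq nat) : bool :=
  [&& is_partition s, all odd s & all (fun x => count_mem x s <= 3) s].

Definition is_Do (s : seq nat) : bool :=
  [&& is_partition s, all odd s & uniq s].

Definition is_D42 (s : seq nat) : bool :=
  [&& is_partition s, all (fun x => x %% 4 == 2) s & uniq s].

Definition P3o := {s : seq nat | is_P3o s}.
Definition Do := {s : seq nat | is_Do s}.
Definition D42 := {s : seq nat | is_D42 s}.

(* Main.v *)
Require Import Defs.
From mathcomp Require Import all_boot.
From mathcomp Require Import zify.

Definition F1 (s : seq nat) := [seq x <- undup s | odd (count_mem x s)].
Definition F2 (s : seq nat) := [seq x.*2 | x <- undup s & 1 < count_mem x s].
Definition H (D E : seq nat) := D ++ flatten [seq [:: y./2; y./2] | y <- E].
Definition G (D E : seq nat) := sort geq (H D E).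

Lemma geq_trans : transitive geq.
Proof. by move=> a b c h1 h2; apply: leq_trans h2 h1. Qed.
Lemma geq_tot : total geq.
Proof. by move=> a b; apply: leq_total. Qed.
Lemma geq_anti : antisymmetric geq.
Proof. by move=> a b /andP [h1 h2]; apply/anti_leq/andP. Qed.

Lemma perm_counts (s1 s2 : seq nat) :
  (forall x, count_mem x s1 = count_mem x s2) -> perm_eq s1 s2.
Proof. by move=> h; apply/allP => x _; apply/eqP. Qed.

Lemma cnt_filt (l : seq nat) p k : uniq l ->
  count_mem k (filter p l) = ((k \in l) && p k).
Proof. by move=> u; rewrite count_uniq_mem ?filter_uniq // mem_filter andbC. Qed.

Lemma cntH D E k : count_mem k (H D E) =
  count_mem k D + 2 * count (fun y => y./2 == k) E.
Proof.
rewrite /H count_cat; congr (_ + _).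
elim: E => //= y E IH; rewrite IH /=.
case: (y./2 == k) => /=; lia.
Qed.

Lemma m42_half y : y %% 4 == 2 -> (y./2).*2 = y /\ odd (y./2) /\ 0 < y./2.
Proof.
move=> h; rewrite -divn2 -muln2.
have h1 : (y %/ 2) %% 2 = 1 by lia.
rewrite modn2 in h1; have ho : odd (y %/ 2) by move: h1; case: odd.
rewrite ho; split; [lia | split => //; lia].
Qed.

Lemma odd_m42 x : odd x -> x.*2 %% 4 == 2.
Proof. by move=> h; rewrite -muln2; have := modn2 x; rewrite h => h'; lia. Qed.

Lemma cntE E k : all (fun x => x %% 4 == 2) E -> uniq E ->
  count (fun y => y./2 == k) E = (k.*2 \in E).
Proof.
move=> /allP a u; rewrite -count_uniq_mem //; apply: eq_in_count => y /a /m42_half [e _].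
apply/eqP/eqP => [<- | ->]; first by rewrite e.
by rewrite doubleK.
Qed.

Lemma sumnH E : all (fun y => ~~ odd y) E ->
  sumn (flatten [seq [:: y./2; y./2] | y <- E]) = sumn E.
Proof.
elim: E => //= y E IH /andP [hy hE]; rewrite -IH //.
have := odd_double_half y; rewrite (negPf hy) -addnn /=; lia.
Qed.

Lemma cntF2 s y : count_mem y (F2 s) =
  (~~ odd y) && ((y./2 \in s) && (1 < count_mem y./2 s)).
Proof.
rewrite /F2 count_map.
case: (boolP (odd y)) => oy /=.
  rewrite (eq_count (a2 := pred0)) ?count_pred0 // => x /=.
  apply/negbTE/eqP => e; move: oy; by rewrite -e odd_double.
have e : y = (y./2).*2 by have := odd_double_half y; rewrite (negPf oy).
rewrite (eq_count (a2 := pred1 y./2)); last first.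
  by move=> x /=; rewrite {1}e; apply/eqP/eqP => [/double_inj|->].
by rewrite cnt_filt ?undup_uniq // mem_undup.
Qed.

Lemma F1_ok s : is_partition s -> all odd s -> is_Do (F1 s).
Proof.
move=> /andP [so po] od; apply/and3P; split.
- apply/andP; split; first by apply/sorted_filter/undup_sorted => //; apply: geq_trans.
  by apply/allP => x; rewrite mem_filter mem_undup => /andP [_]; apply/allP.
- by apply/allP => x; rewrite mem_filter mem_undup => /andP [_]; apply/allP.
- by rewrite filter_uniq ?undup_uniq.
Qed.

Lemma F2_ok s : is_partition s -> all odd s -> is_D42 (F2 s).
Proof.
move=> /andP [so po] od; apply/and3P; split.
- apply/andP; split.
    rewrite /F2 sorted_map; apply: (sub_sorted (e := geq)).
      by move=> a b /=; rewrite leq_double.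
    by apply/sorted_filter/undup_sorted => //; apply: geq_trans.
  apply/allP => z /mapP [x]; rewrite mem_filter mem_undup => /andP [_ xs] ->.
  by rewrite double_gt0; apply: (allP po).
- apply/allP => z /mapP [x]; rewrite mem_filter mem_undup => /andP [_ xs] ->.
  by apply/odd_m42/(allP od).
- by rewrite map_inj_uniq ?filter_uniq ?undup_uniq //; apply: double_inj.
Qed.

Lemma cntG D E k : count_mem k (G D E) = count_mem k (H D E).
Proof. by apply/permP; rewrite perm_sort. Qed.

Lemma G_ok D E : is_Do D -> is_D42 E -> is_P3o (G D E).
Proof.
move=> /and3P [/andP [_ pD] oD uD] /and3P [_ mE uE].
have memH x : x \in H D E -> (0 < x) && odd x.
  rewrite mem_cat => /orP [xD | /flattenP [l /mapP [y yE ->]]].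
    by rewrite (allP pD) // (allP oD).
  have [_ [h1 h2]] := m42_half _ (allP mE y yE).
  by rewrite !inE => /orP [] /eqP ->; rewrite h1 h2.
apply/and3P; split.
- apply/andP; split; first by apply: sort_sorted; apply: geq_tot.
  by apply/allP => x; rewrite mem_sort => /memH /andP [].
- by apply/allP => x; rewrite mem_sort => /memH /andP [].
- apply/allP => x _; rewrite cntG cntH cntE // !count_uniq_mem //.
  by case: (x \in D); case: (x.*2 \in E).
Qed.

Lemma GF s : is_P3o s -> G (F1 s) (F2 s) = s.
Proof.
move=> /and3P [/andP [so po] od c3].
apply: (sorted_eq geq_trans geq_anti); first by apply: sort_sorted; apply: geq_tot.
  done.
rewrite perm_sort; apply: perm_counts => k.
rewrite cntH.
have [_ m2 ok2] := and3P (F2_ok _ (introT andP (conj so po)) od).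
rewrite cntE //.
rewrite -count_uniq_mem // cntF2 odd_double doubleK /F1 cnt_filt ?undup_uniq // mem_undup /=.
case: (boolP (k \in s)) => ks /=; last by rewrite (count_memPn ks).
have := allP c3 k ks.
by case: (count_mem k s) => [|[|[|[|]]]].
Qed.

Lemma FG D E : is_Do D -> is_D42 E -> F1 (G D E) = D /\ F2 (G D E) = E.
Proof.
move=> hD hE; have := hD; have := hE.
move=> /and3P [/andP [sE pE] mE uE] /and3P [/andP [sD pD] oD uD].
have [/andP [sG pG] oG _] := and3P (G_ok _ _ hD hE).
have cG k : count_mem k (G D E) = (k \in D) + 2 * (k.*2 \in E).
  by rewrite cntG cntH cntE // count_uniq_mem.
have memG k : (k \in G D E) = (0 < count_mem k (G D E)).
  by case: (boolP (k \in G D E)) => h; [rewrite -has_pred1 has_count in h | rewrite (count_memPn h)].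
split.
- apply: (sorted_eq geq_trans geq_anti).
  + by apply/sorted_filter/undup_sorted => //; apply: geq_trans.
  + done.
  apply: perm_counts => k.
  rewrite cnt_filt ?undup_uniq // mem_undup memG cG count_uniq_mem //.
  by case: (k \in D); case: (k.*2 \in E).
- apply: (sorted_eq geq_trans geq_anti).
  + have [/andP [] ] := and3P (F2_ok _ (introT andP (conj sG pG)) oG); done.
  + done.
  apply: perm_counts => y.
  rewrite cntF2 memG cG count_uniq_mem //.
  case: (boolP (odd y)) => oy /=.
    case yE: (y \in E) => //.
    by have [e _] := m42_half _ (allP mE y yE); move: oy; rewrite -e odd_double.
  have e : (y./2).*2 = y by have := odd_double_half y; rewrite (negPf oy).
  rewrite e; by case: (y./2 \in D); case: (y \in E).
Qed.

Lemma weightF s : is_P3o s -> weight s = weight (F1 s) + weight (F2 s).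
Proof.
move=> h; rewrite /weight -{1}(GF _ h) (perm_sumn (permEl (perm_sort _ _))) /H sumn_cat sumnH //.
by apply/allP => z /mapP [x _ ->]; rewrite odd_double.
Qed.

Lemma F1_ok' s : is_P3o s -> is_Do (F1 s).
Proof. by case/and3P => hp ho _; apply: F1_ok. Qed.
Lemma F2_ok' s : is_P3o s -> is_D42 (F2 s).
Proof. by case/and3P => hp ho _; apply: F2_ok. Qed.

Theorem lemma2p7 :
  exists f : P3o -> Do * D42,
    bijective f /\
    forall p : P3o,
      weight (proj1_sig p) = weight (proj1_sig (f p).1) + weight (proj1_sig (f p).2).
Proof.
pose f (p : P3o) : Do * D42 :=
  let: exist s hs := p in
  (exist _ (F1 s) (F1_ok' _ hs), exist _ (F2 s) (F2_ok' _ hs)).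
exists f; split.
  pose g (q : Do * D42) : P3o :=
    let: (exist d hd, exist e he) := q in exist _ (G d e) (G_ok _ _ hd he).
  exists g.
    case=> s hs /=.
    by apply: val_inj => /=; apply: GF.
  case=> [[d hd] [e he]] /=.
  have [e1 e2] := FG _ _ hd he.
  by congr pair; apply: val_inj.
case=> s hs /=.
exact: weightF.
Qed.
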